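(* Let $A>0$ be fixed. For $X$ large set $\rho=e^{-1/X}$, $Q=(\log X)^A$ and $\delta_q=q^{-1}X^{-1}(\log X)^A$. For $1\le a\le q\le Q$ with $(a,q)=1$ let $\mathfrak{M}(q,a)=\big(\frac aq-\delta_q,\frac aq+\delta_q\big)$, let $\mathfrak{M}$ be the union of all these intervals, and let $\mathfrak{m}=[-\frac12,\frac12)\setminus\mathfrak{M}$ (arcs understood modulo $1$). Then for $\theta\in\mathfrak{m}$, \[ \Phi_{|\mu|}(\rho\operatorname{e}(\theta))\ll_A X(\log X)^{10-A/4}. \]
   Context: $\operatorname{e}(x)=\exp(2\pi i x)$; $\mu$ is the Möbius function; for $|z|<1$, $\Phi_{|\mu|}(z):=\sum_{j=1}^\infty\sum_{n=1}^\infty\frac{|\mu(n)|}{j}z^{jn}$ (so that $\prod_{n\ge1}(1-z^n)^{-|\mu(n)|}=\exp(\Phi_{|\mu|}(z))$). $\ll_A$ means the implied constant may depend on $A$. *)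

(* Defs.v *)
From mathcomp Require Import ssreflect ssrbool ssrnat eqtype seq prime.
From Stdlib Require Import ZArith.

(* Moebius function mu : nat -> Z  (mu 0 := 0 by convention; unused). *)
Definition mobius (n : nat) : Z :=
  if n == 0%N then 0%Z
  else if all (fun p => logn p n == 1%N) (primes n)
       then ((-1) ^ Z.of_nat (size (primes n)))%Z
       else 0%Z.

From Stdlib Require Import Reals.
From Coquelicot Require Import Coquelicot.
Open Scope R_scope.

Definition abs_mobius (n : nat) : R := Rabs (IZR (mobius n)).

Definition e_ (x : R) : C := (cos (2 * PI * x), sin (2 * PI * x)).

Definition Phi_term (z : C) (j n : nat) : C :=
  scal (abs_mobius n / INR j) (pow_n z (j * n)).

(* Phi_{|mu|}(z) = sum_{j>=1} sum_{n>=1} |mu(n)|/j z^{jn}, computed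
   componentwise (Coquelicot's Series is real-valued). *)
Definition Phi_absmu (z : C) : C :=
  (Series (fun j => Series (fun n => fst (Phi_term z (S j) (S n)))),
   Series (fun j => Series (fun n => snd (Phi_term z (S j) (S n))))).

(* major arcs: theta lies (mod 1) within delta_q of some a/q,
   1 <= a <= q <= Q, gcd(a,q)=1, with Q = (log X)^A, delta_q = (log X)^A/(qX) *)
Definition in_major_arcs (A X theta : R) : Prop :=
  exists (q a : nat) (k : Z),
    (1 <= a)%coq_nat /\ (a <= q)%coq_nat /\ INR q <= Rpower (ln X) A /\
    Nat.gcd a q = 1%nat /\
    Rabs (theta - (INR a / INR q + IZR k)) < Rpower (ln X) A / (INR q * X).

Definition in_minor_arcs (A X theta : R) : Prop :=
  -(1/2) <= theta /\ theta < 1/2 /\ ~ in_major_arcs A X theta.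

(* Main.v *)
Require Import Defs.
From Stdlib Require Import Reals.
From Coquelicot Require Import Coquelicot.

Module NT.
From mathcomp Require Import all_boot.
From Stdlib Require Import ZArith Lia.
Set Implicit Arguments. Unset Strict Implicit.
Local Open Scope nat_scope.

Fixpoint zs (f : nat -> Z) (K : nat) : Z :=
  match K with 0 => 0%Z | S K' => (zs f K' + f (S K'))%Z end.

Lemma zs_ext f g K : (forall d, 0 < d <= K -> f d = g d) -> zs f K = zs g K.
Proof.
elim: K => [//|K IH] H /=; rewrite IH ?H //.
  by rewrite ltn0Sn leqnn.
by move=> d /andP[d0 dK]; apply: H; rewrite d0 (leq_trans dK).
Qed.

Lemma zs_add f g K : zs (fun d => f d + g d)%Z K = (zs f K + zs g K)%Z.
Proof. elim: K => [//|K IH] /=; rewrite IH; lia. Qed.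

Lemma zs_opp f K : zs (fun d => - f d)%Z K = (- zs f K)%Z.
Proof. elim: K => [//|K IH] /=; rewrite IH; lia. Qed.

Lemma zs_vanish f n K : (forall d, n < d -> f d = 0%Z) -> n <= K -> zs f K = zs f n.
Proof.
move=> H; elim: K => [|K IH] nK.
  by move: nK; rewrite leqn0 => /eqP ->.
rewrite leq_eqVlt in nK; case/orP: nK => [/eqP -> //|nK].
by rewrite /= IH // H // Z.add_0_r.
Qed.

Lemma zs_reindex p h K : 0 < p ->
  zs (fun d => if p %| d then h d else 0%Z) K = zs (fun e => h (p * e)) (K %/ p).
Proof.
move=> p0; elim: K => [|K IH]; first by rewrite div0n.
rewrite /= IH divnS //; case: ifP => pd /=.
  have E : K.+1 = p * (K %/ p).+1.
    by rewrite -[in LHS](divnK pd) divnS // pd mulnC.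
  by rewrite add0n -E.
by rewrite add0n Z.add_0_r.
Qed.

Lemma zs_one f K : (forall d, 1 < d -> f d = 0%Z) -> 0 < K -> zs f K = f 1.
Proof.
move=> H K0; rewrite (@zs_vanish f 1 K) //.
Qed.

Lemma mobiusE n : mobius n = if n == 0 then 0%Z else
  if all (fun p => logn p n == 1) (primes n) then ((-1) ^ Z.of_nat (size (primes n)))%Z else 0%Z.
Proof. by []. Qed.

Lemma mu1 : mobius 1 = 1%Z.
Proof. by []. Qed.

Lemma mu0 p d : prime p -> p * p %| d -> mobius d = 0%Z.
Proof.
move=> pp pd; rewrite /mobius; case: eqP => // /eqP d0.
have d0' : 0 < d by rewrite lt0n.
have pin : p \in primes d.
  by rewrite mem_primes pp d0' (dvdn_trans (dvdn_mulr p (dvdnn p)) pd).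
have : 2 <= logn p d by rewrite -pfactor_dvdn // expnS expn1.
case: allP => // H; move: (H p pin) => /eqP ->. by [].
Qed.

Lemma mu_abs n : Z.abs (mobius n) = 0%Z \/ Z.abs (mobius n) = 1%Z.
Proof.
rewrite /mobius; case: eqP => _; first by left.
case: ifP => _; last by left.
right; rewrite Z.abs_pow /=; apply: Z.pow_1_l; lia.
Qed.

Lemma mu_sqfree n d : mobius n <> 0%Z -> 0 < d -> d * d %| n -> d = 1.
Proof.
move=> mn d0 dn; case: (ltngtP d 1) => // [|d1].
  by rewrite ltnS leqn0 => /eqP d00; move: d0; rewrite d00.
case: (pdivP d1) => p pp pd.
exfalso; apply: mn; apply: (mu0 pp).
exact: dvdn_trans (dvdn_mul pd pd) dn.
Qed.

Lemma mu_nonsq n : 0 < n -> mobius n = 0%Z -> exists p, prime p /\ p * p %| n.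
Proof.
rewrite /mobius; move=> n0; have -> : (n == 0) = false by rewrite eqn0Ngt n0.
case: ifP => [_ H|].
  exfalso; move: H; apply/Z.pow_nonzero; lia.
move/negbT; rewrite -has_predC => /hasP [p pin /= lp].
exists p; move: pin; rewrite mem_primes => /and3P [pp _ pn]; split => //.
have : 0 < logn p n by rewrite logn_gt0 mem_primes pp n0 pn.
move=> lg; have : 2 <= logn p n by rewrite ltn_neqAle eq_sym lp lg.
by rewrite -pfactor_dvdn // expnS expn1.
Qed.

Lemma mu_mulp p e : prime p -> ~~ (p %| e) -> 0 < e -> mobius (p * e) = (- mobius e)%Z.
Proof.
move=> pp pe e0.
have p0 := prime_gt0 pp.
have pe0 : 0 < p * e by rewrite muln_gt0 p0.
have perm : perm_eq (primes (p * e)) (p :: primes e).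
  apply: uniq_perm; first exact: primes_uniq.
    by rewrite /= primes_uniq mem_primes pp e0 (negbTE pe).
  by move=> q; rewrite primesM // primes_prime // inE.
rewrite !mobiusE (negbTE (lt0n_neq0 pe0)) (negbTE (lt0n_neq0 e0)).
rewrite (perm_all _ perm) (perm_size perm) /=.
rewrite lognM // logn_prime // eqxx.
have -> : logn p e = 0 by rewrite lognE pp e0 (negbTE pe) andbF.
rewrite /=.
have -> : all (fun q => logn q (p * e) == 1) (primes e) = all (fun q => logn q e == 1) (primes e).
  apply: eq_in_all => q qin; rewrite lognM // logn_prime //.
  have -> : (q == p) = false.
    by apply/negbTE/eqP => qp; move: qin; rewrite qp mem_primes (negbTE pe) !andbF.
  by [].
case: ifP => _; last by [].
change (Z.pow_pos (-1) (Pos.of_succ_nat (size (primes e)))) with ((-1) ^ Z.of_nat (size (primes e)).+1)%Z.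
rewrite Nat2Z.inj_succ Z.pow_succ_r; lia.
Qed.

Theorem NT2 n K : 0 < n -> n <= K ->
  zs (fun d => if d * d %| n then mobius d else 0%Z) K = Z.abs (mobius n).
Proof.
move=> n0 nK.
set f := fun d => if d * d %| n then mobius d else 0%Z.
have van : forall d, n < d -> f d = 0%Z.
  move=> d nd; rewrite /f; case: ifP => // dd.
  have := dvdn_leq n0 dd => dle.
  exfalso; move: (leq_trans nd (leq_trans (leq_pmulr d (leq_trans (ltn0Sn n) nd)) dle)).
  by rewrite ltnn.
case: (Z.eq_dec (mobius n) 0) => mn.
- have [p [pp ppn]] := mu_nonsq n0 mn.
  have p0 := prime_gt0 pp.
  rewrite mn /= (zs_vanish van nK).
  have nK' : n <= p * n by rewrite leq_pmull.
  rewrite -(zs_vanish van nK').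
  set g := fun d => if p %| d then 0%Z else f d.
  rewrite (zs_ext (g := fun d => Z.add (if p %| d then f d else 0%Z) (g d))); last first.
    by move=> d _; rewrite /g; case: ifP => _; lia.
  rewrite zs_add zs_reindex // mulKn //.
  rewrite (zs_ext (f := fun e => f (p * e)) (g := fun e => Z.opp (g e))); last first.
    move=> e /andP [e0 _]; rewrite /f /g.
    case: (boolP (p %| e)) => pe.
      by rewrite (mu0 pp (dvdn_mul (dvdnn p) pe)); case: ifP.
    rewrite mu_mulp //.
    have cop : coprime (p * p) (e * e).
      by rewrite coprimeMl !coprimeMr prime_coprime // pe.
    by rewrite /f mulnACA Gauss_dvd // ppn /=; case: ifP.
  rewrite zs_opp.
  have vg : forall d, n < d -> g d = 0%Z by move=> d nd; rewrite /g van //; case: ifP.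
  rewrite (zs_vanish vg nK'); lia.
- rewrite (zs_one (f := f)).
  + rewrite /f dvd1n mu1; case: (mu_abs n) => //; lia.
  + move=> d d1; rewrite /f; case: ifP => // dd.
    by have E := mu_sqfree mn (ltnW d1) dd; rewrite E in d1.
  + exact: leq_trans n0 nK.
Qed.

Lemma NT2s n K : (0 < n)%coq_nat -> (n <= K)%coq_nat ->
  zs (fun d => if dvdn (Nat.mul d d) n then mobius d else 0%Z) K = Z.abs (mobius n).
Proof. move=> /ltP n0 /leP nK; exact: NT2. Qed.

Lemma divS_true N s : (0 < s)%coq_nat -> dvdn s (S N) = true ->
  divn (S N) s = S (divn N s) /\ Nat.mul s (S (divn N s)) = S N.
Proof.
move=> /ltP s0 h; have E : divn (S N) s = S (divn N s) by rewrite divnS // h.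
split => //; rewrite -E; change (muln s (divn (S N) s) = S N); rewrite mulnC divnK //.
Qed.

Lemma divS_false N s : (0 < s)%coq_nat -> dvdn s (S N) = false -> divn (S N) s = divn N s.
Proof. by move=> /ltP s0 h; rewrite divnS // h. Qed.

Lemma div0s s : divn 0 s = 0.
Proof. exact: div0n. Qed.

End NT.
Unset Implicit Arguments.
Set Strict Implicit.

From Stdlib Require Import Lra Lia ZArith.
Open Scope R_scope.

Definition ep (r t : R) : C := (r * cos (2*PI*t), r * sin (2*PI*t)).

Lemma ep_mult r1 t1 r2 t2 : (ep r1 t1 * ep r2 t2)%C = ep (r1*r2) (t1+t2).
Proof.
unfold ep, Cmult; apply injective_projections; simpl;
replace (2*PI*(t1+t2)) with (2*PI*t1 + 2*PI*t2) by ring;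
rewrite ?cos_plus, ?sin_plus; ring.
Qed.

Lemma pow_ep r t n : pow_n (ep r t) n = ep (r^n) (INR n * t).
Proof.
induction n as [|n IH].
- simpl. unfold ep, one; simpl; unfold one; simpl.
  replace (2*PI*(0*t)) with 0 by ring. rewrite cos_0, sin_0.
  apply injective_projections; simpl; ring.
- change (pow_n (ep r t) (S n)) with (Cmult (ep r t) (pow_n (ep r t) n)).
  rewrite IH, ep_mult, S_INR. f_equal; simpl; ring.
Qed.

Lemma Cmod_ep r t : 0 <= r -> Cmod (ep r t) = r.
Proof.
intros Hr. unfold Cmod, ep; simpl.
replace (r * cos (2 * PI * t) * (r * cos (2 * PI * t) * 1) +
  r * sin (2 * PI * t) * (r * sin (2 * PI * t) * 1)) with (r * r).
- apply sqrt_square; auto.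
- pose proof (sin2_cos2 (2*PI*t)) as H. unfold Rsqr in H. nra.
Qed.

Lemma pow_n_mult (x : C) a b : pow_n (pow_n x a) b = pow_n x (a*b).
Proof.
induction b as [|b IH].
- rewrite Nat.mul_0_r; reflexivity.
- change (pow_n (pow_n x a) (S b)) with (mult (pow_n x a) (pow_n (pow_n x a) b)).
  rewrite IH, <- pow_n_plus. f_equal. lia.
Qed.

Fixpoint csum (f : nat -> C) (N : nat) : C :=
  match N with O => RtoC 0 | S N => (csum f N + f N)%C end.
Fixpoint rsum (f : nat -> R) (N : nat) : R :=
  match N with O => 0 | S N => rsum f N + f N end.

Lemma csum_fst f N : fst (csum f (S N)) = sum_n (fun n => fst (f n)) N.
Proof.
induction N as [|N IH].
- rewrite sum_O; simpl; ring.
- rewrite sum_Sn, <- IH. simpl. reflexivity.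
Qed.

Lemma csum_snd f N : snd (csum f (S N)) = sum_n (fun n => snd (f n)) N.
Proof.
induction N as [|N IH].
- rewrite sum_O; simpl; ring.
- rewrite sum_Sn, <- IH. simpl. reflexivity.
Qed.

Lemma Cmod_csum f N : Cmod (csum f N) <= rsum (fun n => Cmod (f n)) N.
Proof.
induction N as [|N IH]; simpl.
- rewrite Cmod_0; lra.
- eapply Rle_trans; [apply Cmod_triangle|]. lra.
Qed.

Lemma csum_ext f g N : (forall n, (n < N)%nat -> f n = g n) -> csum f N = csum g N.
Proof.
induction N as [|N IH]; intros H; simpl; auto.
rewrite IH by (intros; apply H; lia). rewrite H by lia. reflexivity.
Qed.

Lemma csum_plus f g N : csum (fun n => f n + g n)%C N = (csum f N + csum g N)%C.
Proof. induction N as [|N IH]; simpl. - apply injective_projections; simpl; ring.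
- rewrite IH. ring. Qed.

Lemma csum_scal c f N : csum (fun n => c * f n)%C N = (c * csum f N)%C.
Proof. induction N as [|N IH]; simpl. - apply injective_projections; simpl; ring.
- rewrite IH. ring. Qed.

Lemma csum_zero f N : (forall n, f n = RtoC 0) -> csum f N = RtoC 0.
Proof. intros H; induction N as [|N IH]; simpl; auto. rewrite IH, H. ring. Qed.

Lemma rsum_le f g N : (forall n, (n < N)%nat -> f n <= g n) -> rsum f N <= rsum g N.
Proof.
induction N as [|N IH]; intros H; simpl; [lra|].
assert (rsum f N <= rsum g N) by (apply IH; intros; apply H; lia).
assert (f N <= g N) by (apply H; lia). lra.
Qed.

Lemma rsum_plus f g N : rsum (fun n => f n + g n) N = rsum f N + rsum g N.
Proof. induction N as [|N IH]; simpl; [ring|rewrite IH; ring]. Qed.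

Lemma rsum_scal c f N : rsum (fun n => c * f n) N = c * rsum f N.
Proof. induction N as [|N IH]; simpl; [ring|rewrite IH; ring]. Qed.

Lemma rsum_nonneg f N : (forall n, 0 <= f n) -> 0 <= rsum f N.
Proof. intros H; induction N as [|N IH]; simpl; [lra|]. specialize (H N); lra. Qed.

Definition geo (v : C) (M : nat) : C := csum (fun m => pow_n v (S m)) M.

Lemma csum_zs (f : nat -> Z) (u : C) K :
  csum (fun d => RtoC (IZR (f (S d))) * u)%C K = (RtoC (IZR (NT.zs f K)) * u)%C.
Proof.
induction K as [|K IH]; simpl.
- apply injective_projections; simpl; ring.
- rewrite IH, plus_IZR. apply injective_projections; simpl; ring.
Qed.

Lemma abs_mobius_Z n : abs_mobius n = IZR (Z.abs (mobius n)).
Proof. unfold abs_mobius. rewrite Rabs_Zabs. reflexivity. Qed.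

Lemma ident (w : C) N K : (N <= K)%nat ->
  csum (fun n => RtoC (abs_mobius (S n)) * pow_n w (S n))%C N =
  csum (fun d => RtoC (IZR (mobius (S d))) *
     geo (pow_n w (S d * S d)) (div.divn N (S d * S d)))%C K.
Proof.
induction N as [|N IH]; intros HK.
- simpl. symmetry. apply csum_zero. intros d. rewrite NT.div0s. unfold geo. simpl csum. ring.
- change (csum ?f (S N)) with (csum f N + f N)%C. rewrite IH by lia.
  pose (F := fun d => if div.dvdn (Nat.mul d d) (S N) then mobius d else 0%Z).
  transitivity (csum (fun d => RtoC (IZR (mobius (S d))) *
     geo (pow_n w (S d * S d)) (div.divn N (S d * S d)))%C K +
     csum (fun d => RtoC (IZR (F (S d))) * pow_n w (S N))%C K)%C.
  + f_equal. rewrite csum_zs. unfold F. rewrite NT.NT2s by lia.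
    rewrite abs_mobius_Z. reflexivity.
  + rewrite <- csum_plus. apply csum_ext. intros d _.
    unfold F. assert (Hs : (0 < S d * S d)%nat) by lia.
    destruct (div.dvdn (S d * S d) (S N)) eqn:E.
    * destruct (NT.divS_true Hs E) as [E1 E2].
      rewrite E1. unfold geo. change (csum ?f (S ?M)) with (csum f M + f M)%C. cbv beta. rewrite (pow_n_mult w (S d * S d) (S (div.divn N (S d * S d)))), E2. ring.
    * rewrite (NT.divS_false Hs E). simpl. ring.
Qed.

Lemma rsum_ext f g N : (forall n, (n < N)%nat -> f n = g n) -> rsum f N = rsum g N.
Proof.
induction N as [|N IH]; intros H; simpl; auto.
rewrite IH by (intros; apply H; lia). rewrite H by lia. reflexivity.
Qed.

Lemma rsum_geo r M : r <> 1 -> rsum (fun m => r ^ (S m)) M = (r - r ^ (S M)) / (1 - r).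
Proof.
intros Hr. induction M as [|M IH].
- simpl. field. lra.
- change (rsum ?f (S M)) with (rsum f M + f M). rewrite IH. simpl. field. lra.
Qed.

Lemma Cmod_pow_ep r t n : 0 <= r -> Cmod (pow_n (ep r t) n) = r ^ n.
Proof. intros Hr. rewrite pow_ep, Cmod_ep; auto. apply pow_le; auto. Qed.

Lemma geo_a r t M : 0 <= r < 1 -> Cmod (geo (ep r t) M) <= r / (1 - r).
Proof.
intros Hr. unfold geo. eapply Rle_trans; [apply Cmod_csum|].
rewrite (rsum_ext _ (fun m => r ^ (S m))) by (intros; apply Cmod_pow_ep; lra).
rewrite rsum_geo by lra.
apply Rmult_le_compat_r. { apply Rlt_le, Rinv_0_lt_compat; lra. }
assert (0 <= r ^ S M) by (apply pow_le; lra). lra.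
Qed.

Lemma geo_id v M : (geo v M * (RtoC 1 - v))%C = (v - pow_n v (S M))%C.
Proof.
induction M as [|M IH].
- unfold geo; simpl csum. change (pow_n v 1) with (mult v (pow_n v 0)).
  change (pow_n v 0) with (RtoC 1). change (mult v (RtoC 1)) with (v * RtoC 1)%C. ring.
- unfold geo in *. change (csum ?f (S M)) with (csum f M + f M)%C.
  change (pow_n v (S (S M))) with (v * pow_n v (S M))%C.
  rewrite Cmult_plus_distr_r, IH. ring.
Qed.

Lemma geo_b r t M : 0 <= r <= 1 -> 0 < Cmod (RtoC 1 - ep r t) ->
  Cmod (geo (ep r t) M) <= 2 / Cmod (RtoC 1 - ep r t).
Proof.
intros Hr Hc.
apply (Rmult_le_reg_r (Cmod (RtoC 1 - ep r t))); auto.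
unfold Rdiv. rewrite Rmult_assoc, Rinv_l by lra. rewrite Rmult_1_r.
rewrite <- Cmod_mult, geo_id.
unfold Cminus. eapply Rle_trans; [apply Cmod_triangle|].
rewrite Cmod_opp, Cmod_ep by lra. rewrite Cmod_pow_ep by lra.
assert (r ^ S M <= 1 ^ S M) by (apply pow_incr; lra). rewrite pow1 in *. lra.
Qed.

Lemma IZR_nat_or (m : Z) : exists k : nat, IZR m = INR k \/ IZR m = - INR k.
Proof.
destruct (Z_le_gt_dec 0 m) as [H|H].
- exists (Z.to_nat m). left. rewrite INR_IZR_INZ, Z2Nat.id by lia. reflexivity.
- exists (Z.to_nat (- m)). right. rewrite INR_IZR_INZ, Z2Nat.id by lia.
  rewrite opp_IZR. ring.
Qed.

Lemma cos_periodZ x (m : Z) : cos (x + 2 * IZR m * PI) = cos x.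
Proof.
destruct (IZR_nat_or m) as [k [H|H]]; rewrite H.
- apply cos_period.
- rewrite <- (cos_period (x + 2 * - INR k * PI) k). f_equal. ring.
Qed.

Lemma sin_periodZ x (m : Z) : sin (x + 2 * IZR m * PI) = sin x.
Proof.
destruct (IZR_nat_or m) as [k [H|H]]; rewrite H.
- apply sin_period.
- rewrite <- (sin_period (x + 2 * - INR k * PI) k). f_equal. ring.
Qed.

Lemma sin_ge_third a : 0 <= a <= 2 -> a / 3 <= sin a.
Proof.
intros Ha. destruct (pre_sin_bound a 0) as [H _]; try lra.
eapply Rle_trans; [|apply H].
unfold sin_approx, sin_term. simpl. nra.
Qed.

Lemma LB r t d : 0 <= r -> 0 < d -> (forall m : Z, d <= Rabs (t - IZR m)) ->
  d <= Cmod (RtoC 1 - ep r t).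
Proof.
intros Hr Hd H.
set (m := Int_part (t + /2)).
destruct (base_Int_part (t + /2)) as [B1 B2]. fold m in B1, B2.
set (s := t - IZR m).
assert (Hs : -/2 <= s < /2) by (unfold s; lra).
assert (Hds : d <= Rabs s) by apply H.
assert (Ecos : cos (2*PI*t) = cos (2*PI*s)).
{ rewrite <- (cos_periodZ (2*PI*s) m). f_equal. unfold s. ring. }
assert (Esin : sin (2*PI*t) = sin (2*PI*s)).
{ rewrite <- (sin_periodZ (2*PI*s) m). f_equal. unfold s. ring. }
assert (HPI := PI2_3_2). assert (HPI4 := PI_4).
assert (EC : Cmod (RtoC 1 - ep r t) = sqrt ((1 - r * cos (2*PI*s))^2 + (r * sin (2*PI*s))^2)).
{ unfold Cmod, ep, Cminus, Cplus, Copp, RtoC; simpl. rewrite Ecos, Esin. f_equal. ring. }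
rewrite EC.
destruct (Rle_lt_dec (Rabs s) (/4)) as [Hs4|Hs4].
-
  set (a := 2 * PI * Rabs s).
  assert (Ha : 0 <= a <= 2). { unfold a. split; [apply Rmult_le_pos; [lra|apply Rabs_pos]|]. nra. }
  assert (Hsa : (sin (2*PI*s))^2 = (sin a)^2).
  { unfold a. destruct (Rle_dec 0 s) as [Hp|Hn].
    - rewrite Rabs_pos_eq by lra. reflexivity.
    - rewrite Rabs_left by lra. replace (2 * PI * - s) with (- (2*PI*s)) by ring.
      rewrite sin_neg. ring. }
  assert (Hsin := sin_ge_third a Ha).
  assert (Hpos : 0 <= a / 3) by lra.
  assert (Hda : d <= a / 3) by (unfold a; nra).
  apply (Rle_trans _ (sqrt (d^2))); [rewrite sqrt_pow2; lra | apply sqrt_le_1_alt].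
  pose proof (sin2_cos2 (2*PI*s)) as Hsc. unfold Rsqr in *.
  assert (d^2 <= (sin a)^2) by nra.
  set (c := cos (2*PI*s)) in *. set (S := sin (2*PI*s)) in *.
  assert (E: (1 - r*c)^2 + (r*S)^2 - ((r-c)^2 + S^2) = (r^2 - 1) * (S*S + c*c - 1)) by ring.
  assert (E2 : (1 - r*c)^2 + (r*S)^2 = (r-c)^2 + S^2).
  { replace (S*S + c*c - 1) with 0 in E by lra. lra. }
  assert (0 <= (r-c)^2) by apply pow2_ge_0. lra.
-
  assert (Hc : cos (2*PI*s) <= 0).
  { destruct (Rle_dec 0 s) as [Hp|Hn].
    - rewrite Rabs_pos_eq in Hs4 by lra. apply cos_le_0; nra.
    - rewrite Rabs_left in Hs4 by lra. replace (2*PI*s) with (- (2*PI*(-s))) by ring.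
      rewrite cos_neg. apply cos_le_0; nra. }
  assert (Hd1 : d <= 1).
  { assert (Rabs s <= /2) by (apply Rabs_le; lra). lra. }
  apply (Rle_trans _ (sqrt (d^2))); [rewrite sqrt_pow2; lra | apply sqrt_le_1_alt].
  assert (1 <= 1 - r * cos (2 * PI * s)) by nra. nra.
Qed.

Lemma natgcd_of_Zgcd (a q : nat) : Z.gcd (Z.of_nat a) (Z.of_nat q) = 1%Z -> Nat.gcd a q = 1%nat.
Proof.
intros H.
destruct (Nat.gcd_divide_l a q) as [x Hx]. destruct (Nat.gcd_divide_r a q) as [y Hy].
assert (D : (Z.of_nat (Nat.gcd a q) | 1)%Z).
{ rewrite <- H. apply Z.gcd_greatest.
  - exists (Z.of_nat x). rewrite Hx at 1. rewrite Nat2Z.inj_mul. reflexivity.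
  - exists (Z.of_nat y). rewrite Hy at 1. rewrite Nat2Z.inj_mul. reflexivity. }
apply Z.divide_1_r_nonneg in D; [|lia]. lia.
Qed.

Lemma RA A X th (Q0 : nat) (m : Z) : 0 < X -> in_minor_arcs A X th -> (1 <= Q0)%nat ->
  INR Q0 <= Rpower (ln X) A -> Rpower (ln X) A / X <= Rabs (INR Q0 * th - IZR m).
Proof.
intros HX [_ [_ Hmin]] HQ HQL.
set (L := Rpower (ln X) A) in *.
destruct (Rle_lt_dec (L / X) (Rabs (INR Q0 * th - IZR m))) as [Hle|Hlt]; [exact Hle|].
exfalso. apply Hmin.
set (Qz := Z.of_nat Q0).
set (g := Z.gcd m Qz).
assert (HQz : (0 < Qz)%Z) by (unfold Qz; lia).
assert (Hg0 : (0 < g)%Z).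
{ assert (0 <= g)%Z by apply Z.gcd_nonneg.
  assert (g <> 0%Z). { intros E. apply Z.gcd_eq_0 in E. lia. } lia. }
destruct (Z.gcd_divide_l m Qz) as [a0 Ha0]. destruct (Z.gcd_divide_r m Qz) as [q Hq].
fold g in Ha0, Hq.
assert (Hq0 : (0 < q)%Z) by nia.
assert (HqQ : (q <= Qz)%Z) by nia.
assert (Hcop : Z.gcd a0 q = 1%Z).
{ assert (E : g = (Z.gcd a0 q * Z.abs g)%Z).
  { unfold g at 1. rewrite Ha0 at 1. rewrite Hq at 1. apply Z.gcd_mul_mono_r. }
  rewrite Z.abs_eq in E by lia.
  assert (0 <= Z.gcd a0 q)%Z by apply Z.gcd_nonneg. nia. }
assert (Happ : Rabs (th - IZR a0 / IZR q) < L / (IZR q * X)).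
{ assert (EQ : INR Q0 = IZR q * IZR g).
  { rewrite INR_IZR_INZ. fold Qz. rewrite Hq, mult_IZR. reflexivity. }
  assert (Em : IZR m = IZR a0 * IZR g) by (rewrite Ha0, mult_IZR; reflexivity).
  assert (Hgr : 1 <= IZR g) by (apply IZR_le; lia).
  assert (Hqr : 0 < IZR q) by (apply IZR_lt; lia).
  rewrite EQ, Em in Hlt.
  replace (IZR q * IZR g * th - IZR a0 * IZR g) with ((IZR q * IZR g) * (th - IZR a0 / IZR q)) in Hlt
    by (field; lra).
  rewrite Rabs_mult, (Rabs_pos_eq (IZR q * IZR g)) in Hlt by nra.
  assert (HL : 0 < L) by (unfold L, Rpower; apply exp_pos).
  apply (Rmult_lt_reg_l (IZR q * IZR g)); [nra|].
  eapply Rlt_le_trans; [exact Hlt|].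
  replace (IZR q * IZR g * (L / (IZR q * X))) with (IZR g * (L / X)) by (field; lra).
  assert (0 < L / X) by (apply Rdiv_lt_0_compat; lra). nra. }
assert (HqL : IZR q <= L).
{ eapply Rle_trans; [|exact HQL]. rewrite INR_IZR_INZ. apply IZR_le. exact HqQ. }
pose proof (Z.div_mod a0 q ltac:(lia)) as Hdm.
pose proof (Z.mod_pos_bound a0 q Hq0) as Hmb.
destruct (Z.eq_dec (a0 mod q) 0) as [Hr0|Hr0].
-
  assert (Hq1 : q = 1%Z).
  { assert (Z.gcd a0 q = q).
    { apply Z.gcd_unique_alt; [lia|]. intros k. split.
      - intros Hk. split; [|exact Hk]. eapply Z.divide_trans; [exact Hk|].
        exists (a0 / q)%Z. lia.
      - intros [H1 H2]; exact H2. }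
    lia. }
  exists 1%nat, 1%nat, (a0 - 1)%Z.
  split; [lia|]. split; [lia|]. split; [rewrite Hq1 in HqL; simpl; exact HqL|].
  split; [reflexivity|].
  rewrite Hq1 in Happ. simpl INR. rewrite minus_IZR.
  replace (1 / 1 + (IZR a0 - 1)) with (IZR a0 / IZR 1) by (simpl; field).
  replace (1 * X) with (IZR 1 * X) by (simpl; ring). exact Happ.
- set (rr := (a0 mod q)%Z) in *.
  exists (Z.to_nat q), (Z.to_nat rr), (a0 / q)%Z.
  assert (Er : INR (Z.to_nat rr) = IZR rr) by (rewrite INR_IZR_INZ, Z2Nat.id by lia; reflexivity).
  assert (Eq : INR (Z.to_nat q) = IZR q) by (rewrite INR_IZR_INZ, Z2Nat.id by lia; reflexivity).
  split; [lia|]. split; [lia|]. split; [rewrite Eq; exact HqL|].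
  split.
  + apply natgcd_of_Zgcd. rewrite !Z2Nat.id by lia. unfold rr. rewrite Z.gcd_mod_l. exact Hcop.
  + rewrite Er, Eq.
    replace (IZR rr / IZR q + IZR (a0 / q)) with (IZR a0 / IZR q).
    * exact Happ.
    * assert (Hqr : 0 < IZR q) by (apply IZR_lt; lia).
      rewrite Hdm at 1. rewrite plus_IZR, mult_IZR. field. lra.
Qed.

Lemma scal_C (r : R) (x : C) : @scal R_Ring (prod_ModuleSpace R_Ring R_ModuleSpace R_ModuleSpace) r x = (RtoC r * x)%C.
Proof. destruct x as [a b]. unfold scal; simpl. unfold prod_scal; simpl. unfold scal; simpl. unfold mult; simpl. apply injective_projections; simpl; ring. Qed.

Lemma Phi_term_eq z J n : Phi_term z J n = (RtoC (abs_mobius n / INR J) * pow_n z (J * n))%C.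
Proof. unfold Phi_term. apply scal_C. Qed.

Lemma snd_le_Cmod c : Rabs (snd c) <= Cmod c.
Proof.
destruct c as [a b]. unfold Cmod; simpl.
rewrite <- sqrt_Rsqr_abs. apply sqrt_le_1_alt. unfold Rsqr. nra.
Qed.

Lemma fst_le_Cmod c : Rabs (fst c) <= Cmod c.
Proof. apply re_le_Cmod. Qed.

Lemma exp_pow_n x n : exp x ^ n = exp (INR n * x).
Proof.
induction n as [|n IH].
- simpl. rewrite Rmult_0_l, exp_0. reflexivity.
- simpl pow. rewrite IH, S_INR, <- exp_plus. f_equal. ring.
Qed.

Lemma RHO X n : 0 < X -> (1 <= n)%nat ->
  exp (-/X) ^ n < 1 /\ exp (-/X) ^ n / (1 - exp (-/X) ^ n) <= X / INR n.
Proof.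
intros HX Hn. rewrite exp_pow_n.
assert (Hn' : 1 <= INR n) by (apply (le_INR 1); lia).
set (u := INR n / X).
assert (Hu : 0 < u) by (unfold u; apply Rdiv_lt_0_compat; lra).
replace (INR n * - / X) with (- u) by (unfold u; field; lra).
assert (E : exp (-u) * exp u = 1) by (rewrite <- exp_plus, Rplus_opp_l; apply exp_0).
assert (Hexp := exp_ineq1_le u).
assert (Hr := exp_pos (-u)).
assert (Hlt : exp (-u) < 1).
{ rewrite <- exp_0. apply exp_increasing. lra. }
split; [exact Hlt|].
replace (X / INR n) with (/ u) by (unfold u; field; lra).
apply (Rmult_le_reg_r ((1 - exp (-u)) * u)); [nra|].
field_simplify; try lra.
nra.
Qed.

Definition beta (X L : R) (T J d' : nat) : R :=
  if andb (Nat.leb J T) (Nat.leb d' T) then 2 * X / L else X / INR J * / (INR d')^2.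

Lemma Lpos X A : 0 < Rpower (ln X) A.
Proof. unfold Rpower. apply exp_pos. Qed.

Lemma per_d A X th (T J d M : nat) : 0 < X -> in_minor_arcs A X th ->
  INR T ^ 3 <= Rpower (ln X) A -> (1 <= J)%nat ->
  Cmod (geo (pow_n (ep (exp (-/X) ^ J) (INR J * th)) (S d * S d)) M)
   <= beta X (Rpower (ln X) A) T J (S d).
Proof.
intros HX Hmin HT HJ.
set (L := Rpower (ln X) A) in *.
assert (HL : 0 < L) by apply Lpos.
rewrite pow_ep, <- pow_mult.
set (n := (J * (S d * S d))%nat).
assert (Hn : (1 <= n)%nat) by (unfold n; nia).
destruct (RHO X n HX Hn) as [Hr1 Hr2].
assert (Hr0 : 0 <= exp (-/X) ^ n) by (apply pow_le; apply Rlt_le, exp_pos).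
unfold beta.
destruct (andb (Nat.leb J T) (Nat.leb (S d) T)) eqn:E.
- apply Bool.andb_true_iff in E. destruct E as [E1 E2].
  apply Nat.leb_le in E1, E2.
  assert (HnT : INR n <= L).
  { eapply Rle_trans; [|exact HT].
    replace (INR T ^ 3) with (INR (T * T * T)) by (rewrite !mult_INR; simpl; ring).
    apply le_INR. unfold n. assert (S d * S d <= T * T)%nat by (apply Nat.mul_le_mono; lia). replace (T * T * T)%nat with (T * (T * T))%nat by ring. apply Nat.mul_le_mono; lia. }
  assert (HLX : 0 < L / X) by (apply Rdiv_lt_0_compat; lra).
  assert (Hlb : L / X <= Cmod (RtoC 1 - ep (exp (- / X) ^ n) (INR (S d * S d) * (INR J * th)))).
  { apply LB; [exact Hr0|exact HLX|]. intros m.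
    replace (INR (S d * S d) * (INR J * th)) with (INR n * th)
      by (unfold n; rewrite !mult_INR; ring).
    apply RA; auto. }
  eapply Rle_trans; [apply geo_b; [lra|lra]|].
  replace (2 * X / L) with (2 / (L / X)) by (field; lra).
  apply Rmult_le_compat_l; [lra|]. apply Rinv_le_contravar; lra.
- eapply Rle_trans; [apply geo_a; lra|].
  eapply Rle_trans; [exact Hr2|].
  unfold n. rewrite !mult_INR. right.
  assert (0 < INR J) by (apply lt_0_INR; lia). assert (0 < INR (S d)) by (apply lt_0_INR; lia).
  field. split; lra.
Qed.

Lemma z_ep r th : (RtoC r * e_ th)%C = ep r th.
Proof. unfold e_, ep, Cmult, RtoC; apply injective_projections; simpl; ring. Qed.

Lemma abs_mu_le1 n : Rabs (IZR (mobius n)) <= 1.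
Proof. rewrite Rabs_Zabs. destruct (NT.mu_abs n) as [E|E]; rewrite E; simpl; lra. Qed.

Lemma per_j A X th (T J N : nat) : 0 < X -> in_minor_arcs A X th ->
  INR T ^ 3 <= Rpower (ln X) A -> (1 <= J)%nat ->
  Cmod (csum (fun n => Phi_term (RtoC (exp (-/X)) * e_ th)%C J (S n)) N)
   <= / INR J * rsum (fun d => beta X (Rpower (ln X) A) T J (S d)) N.
Proof.
intros HX Hmin HT HJ.
rewrite z_ep.
set (w := pow_n (ep (exp (-/X)) th) J).
assert (Hw : w = ep (exp (-/X) ^ J) (INR J * th)) by (unfold w; apply pow_ep).
rewrite (csum_ext _ (fun n => RtoC (/ INR J) * (RtoC (abs_mobius (S n)) * pow_n w (S n)))%C).
2:{ intros n _. rewrite Phi_term_eq. unfold w. rewrite pow_n_mult.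
    unfold Rdiv. rewrite RtoC_mult. ring. }
rewrite csum_scal, Cmod_mult, Cmod_R.
assert (HJr : 0 < INR J) by (apply lt_0_INR; lia).
rewrite Rabs_pos_eq by (apply Rlt_le, Rinv_0_lt_compat; lra).
apply Rmult_le_compat_l; [apply Rlt_le, Rinv_0_lt_compat; lra|].
rewrite (ident w N N (le_n N)).
eapply Rle_trans; [apply Cmod_csum|].
apply rsum_le. intros d _.
rewrite Cmod_mult, Cmod_R.
eapply Rle_trans.
{ apply Rmult_le_compat_r; [apply Cmod_ge_0|apply abs_mu_le1]. }
rewrite Rmult_1_l. rewrite Hw. apply per_d; auto.
Qed.

Lemma rsum_count T N : rsum (fun d => if Nat.leb (S d) T then 1 else 0) N <= INR T.
Proof.
assert (H : rsum (fun d => if Nat.leb (S d) T then 1 else 0) N <= INR (Nat.min N T)).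
{ induction N as [|N IH]; [simpl; lra|].
  change (rsum ?f (S N)) with (rsum f N + f N); cbv beta.
  destruct (Nat.leb (S N) T) eqn:E.
  - apply Nat.leb_le in E. rewrite Nat.min_l in IH by lia. rewrite Nat.min_l by lia.
    rewrite S_INR. lra.
  - apply Nat.leb_gt in E. rewrite Nat.min_r in IH by lia. rewrite Nat.min_r by lia. lra. }
eapply Rle_trans; [exact H|]. apply le_INR. lia.
Qed.

Lemma rsum_tail T N :
  rsum (fun d => if Nat.ltb T (S d) then / (INR (S d))^2 else 0) N
   <= 2 / INR (S T) - 2 / INR (S (Nat.max T N)).
Proof.
induction N as [|N IH].
- simpl rsum. rewrite Nat.max_l by lia. lra.
- change (rsum ?f (S N)) with (rsum f N + f N); cbv beta.
  destruct (Nat.ltb T (S N)) eqn:E.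
  + apply Nat.ltb_lt in E. rewrite Nat.max_r in IH by lia. rewrite Nat.max_r by lia.
    assert (HN : 0 < INR (S N)) by (apply lt_0_INR; lia).
    rewrite (S_INR (S N)).
    assert (Hk : / INR (S N) ^ 2 <= 2 / INR (S N) - 2 / (INR (S N) + 1)).
    { apply (Rmult_le_reg_r (INR (S N) ^ 2 * (INR (S N) + 1))); [nra|].
      field_simplify; try lra. assert (1 <= INR (S N)) by (apply (le_INR 1); lia). lra. }
    lra.
  + apply Nat.ltb_ge in E. rewrite Nat.max_l in IH by lia. rewrite Nat.max_l by lia. lra.
Qed.

Lemma rsum_tail' T N :
  rsum (fun d => if Nat.ltb T (S d) then / (INR (S d))^2 else 0) N <= 2 / INR (S T).
Proof.
eapply Rle_trans; [apply rsum_tail|].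
assert (0 < INR (S (Nat.max T N))) by (apply lt_0_INR; lia).
assert (0 <= 2 / INR (S (Nat.max T N))) by (apply Rlt_le, Rdiv_lt_0_compat; lra). lra.
Qed.

Lemma rsum_inv2 N : rsum (fun d => / (INR (S d))^2) N <= 2.
Proof.
rewrite (rsum_ext _ (fun d => if Nat.ltb 0 (S d) then / (INR (S d))^2 else 0)).
- eapply Rle_trans; [apply rsum_tail'|]. simpl. lra.
- intros n _. reflexivity.
Qed.

Definition bJ (X L : R) (T J : nat) : R :=
  / INR J * (if Nat.leb J T then INR T * (2*X/L) + X / INR J * (2 / INR (S T)) else X / INR J * 2).

Lemma sum_beta X L (T J N : nat) : 0 < X -> 0 < L -> (1 <= J)%nat ->
  / INR J * rsum (fun d => beta X L T J (S d)) N <= bJ X L T J.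
Proof.
intros HX HL HJ. unfold bJ.
assert (HJr : 0 < INR J) by (apply lt_0_INR; lia).
apply Rmult_le_compat_l; [apply Rlt_le, Rinv_0_lt_compat; lra|].
assert (HXJ : 0 <= X / INR J) by (apply Rlt_le, Rdiv_lt_0_compat; lra).
unfold beta. destruct (Nat.leb J T) eqn:E; cbn [andb].
- eapply Rle_trans.
  { apply (rsum_le _ (fun d => 2 * X / L * (if Nat.leb (S d) T then 1 else 0) +
       X / INR J * (if Nat.ltb T (S d) then / (INR (S d))^2 else 0))).
    intros d _. destruct (Nat.leb (S d) T) eqn:E1.
    - apply Nat.leb_le in E1. assert (Nat.ltb T (S d) = false) as -> by (apply Nat.ltb_ge; lia). lra.
    - apply Nat.leb_gt in E1. assert (Nat.ltb T (S d) = true) as -> by (apply Nat.ltb_lt; lia). lra. }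
  rewrite rsum_plus, !rsum_scal.
  assert (H1 := rsum_count T N). assert (H2 := rsum_tail' T N).
  assert (0 <= 2 * X / L) by (apply Rlt_le, Rdiv_lt_0_compat; lra).
  assert (X / INR J * rsum (fun d => if Nat.ltb T (S d) then / (INR (S d))^2 else 0) N <= X / INR J * (2 / INR (S T)))
    by (apply Rmult_le_compat_l; auto).
  nra.
- rewrite rsum_scal. apply Rmult_le_compat_l; auto. apply rsum_inv2.
Qed.

Lemma sum_bJ X L (T M : nat) : 0 < X -> 0 < L ->
  rsum (fun j => bJ X L T (S j)) M <= INR T * INR T * (2*X/L) + 8 * X / INR (S T).
Proof.
intros HX HL.
assert (HT : 0 < INR (S T)) by (apply lt_0_INR; lia).
assert (HT0 : 0 <= INR T) by apply pos_INR.
set (c1 := INR T * (2*X/L)). set (c2 := 2 * X / INR (S T)).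
assert (Hc1 : 0 <= c1) by (unfold c1; apply Rmult_le_pos; auto; apply Rlt_le, Rdiv_lt_0_compat; lra).
assert (Hc2 : 0 <= c2) by (unfold c2; apply Rlt_le, Rdiv_lt_0_compat; lra).
eapply Rle_trans.
{ apply (rsum_le _ (fun j => c1 * (if Nat.leb (S j) T then 1 else 0) + c2 * / (INR (S j))^2 +
     (2 * X) * (if Nat.ltb T (S j) then / (INR (S j))^2 else 0))).
  intros j _. unfold bJ.
  assert (HJ : 1 <= INR (S j)) by (apply (le_INR 1); lia).
  assert (HJ0 : 0 < INR (S j)) by lra.
  destruct (Nat.leb (S j) T) eqn:E.
  - apply Nat.leb_le in E. assert (Nat.ltb T (S j) = false) as -> by (apply Nat.ltb_ge; lia).
    assert (E1 : / INR (S j) * (INR T * (2 * X / L) + X / INR (S j) * (2 / INR (S T)))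
       = / INR (S j) * c1 + c2 * / INR (S j) ^ 2) by (unfold c1, c2; field; lra).
    rewrite E1.
    assert (/ INR (S j) * c1 <= c1).
    { rewrite <- (Rmult_1_l c1) at 2. apply Rmult_le_compat_r; auto.
      rewrite <- Rinv_1. apply Rinv_le_contravar; lra. }
    lra.
  - apply Nat.leb_gt in E. assert (Nat.ltb T (S j) = true) as -> by (apply Nat.ltb_lt; lia).
    assert (E1 : / INR (S j) * (X / INR (S j) * 2) = 2 * X * / INR (S j) ^ 2) by (field; lra).
    rewrite E1.
    assert (0 <= c2 * / INR (S j) ^ 2).
    { apply Rmult_le_pos; auto. apply Rlt_le, Rinv_0_lt_compat. apply pow_lt; lra. }
    lra. }
rewrite !rsum_plus, !rsum_scal.
assert (H1 := rsum_count T M). assert (H2 := rsum_inv2 M). assert (H3 := rsum_tail' T M).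
assert (c1 * rsum (fun d => if Nat.leb (S d) T then 1 else 0) M <= c1 * INR T) by (apply Rmult_le_compat_l; auto).
assert (c2 * rsum (fun d => / INR (S d) ^ 2) M <= c2 * 2) by (apply Rmult_le_compat_l; auto).
assert (2 * X * rsum (fun d => if Nat.ltb T (S d) then / INR (S d) ^ 2 else 0) M <= 2 * X * (2 / INR (S T)))
  by (apply Rmult_le_compat_l; lra).
assert (E : INR T * INR T * (2 * X / L) + 8 * X / INR (S T) = c1 * INR T + c2 * 2 + 2 * X * (2 / INR (S T)))
  by (unfold c1, c2; field; lra).
rewrite E. lra.
Qed.

Lemma LL (u v : nat -> R) B : ex_series u -> ex_series v ->
  (forall N, Cmod (sum_n u N, sum_n v N) <= B) -> Cmod (Series u, Series v) <= B.
Proof.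
intros Hu Hv H.
assert (HB : 0 <= B) by (eapply Rle_trans; [apply Cmod_ge_0|apply (H 0%nat)]).
assert (Lu : is_lim_seq (sum_n u) (Series u)) by (apply (Series_correct u Hu)).
assert (Lv : is_lim_seq (sum_n v) (Series v)) by (apply (Series_correct v Hv)).
assert (Lw : is_lim_seq (fun N => sum_n u N * sum_n u N + sum_n v N * sum_n v N)
                (Series u * Series u + Series v * Series v)).
{ apply is_lim_seq_plus'; apply is_lim_seq_mult'; auto. }
assert (Hle : Rbar_le (Series u * Series u + Series v * Series v) (B * B)).
{ eapply is_lim_seq_le; [|exact Lw|apply is_lim_seq_const].
  intros N. specialize (H N). unfold Cmod in H; simpl in H.
  set (y := sum_n u N * (sum_n u N * 1) + sum_n v N * (sum_n v N * 1)) in H.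
  assert (Hy : 0 <= y) by (unfold y; nra).
  assert (Hs := sqrt_sqrt y Hy). assert (Hp := sqrt_pos y).
  assert (y <= B * B) by nra. unfold y in *. nra. }
simpl in Hle. unfold Cmod; simpl.
rewrite <- (sqrt_square B) by exact HB. apply sqrt_le_1_alt. nra.
Qed.

Lemma LLc (f : nat -> C) B :
  ex_series (fun n => fst (f n)) -> ex_series (fun n => snd (f n)) ->
  (forall N, Cmod (csum f N) <= B) ->
  Cmod (Series (fun n => fst (f n)), Series (fun n => snd (f n))) <= B.
Proof.
intros H1 H2 H. apply LL; auto. intros N.
rewrite <- csum_fst, <- csum_snd. destruct (csum f (S N)) eqn:E. simpl. rewrite <- E. apply H.
Qed.

Lemma rsum_geo0 r N : 0 <= r < 1 -> rsum (fun n => r ^ n) N <= / (1 - r).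
Proof.
intros Hr.
assert (E : rsum (fun n => r ^ n) N = (1 - r ^ N) / (1 - r)).
{ induction N as [|N IH]; [simpl; field; lra|].
  change (rsum ?f (S N)) with (rsum f N + f N). rewrite IH. simpl. field. lra. }
rewrite E. assert (0 <= r ^ N) by (apply pow_le; lra).
unfold Rdiv. assert (0 < / (1 - r)) by (apply Rinv_0_lt_compat; lra). nra.
Qed.

Lemma pow_decr r a b : 0 <= r <= 1 -> (b <= a)%nat -> r ^ a <= r ^ b.
Proof.
intros Hr Hab. replace a with (b + (a - b))%nat by lia. rewrite pow_add.
assert (0 <= r ^ b) by (apply pow_le; lra).
assert (r ^ (a - b) <= 1 ^ (a - b)) by (apply pow_incr; lra). rewrite pow1 in *.
assert (0 <= r ^ (a - b)) by (apply pow_le; lra). nra.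
Qed.

Lemma crude X th (j n : nat) : 0 < X ->
  Cmod (Phi_term (RtoC (exp (-/X)) * e_ th)%C (S j) (S n)) <= exp (-/X) ^ j * exp (-/X) ^ n.
Proof.
intros HX. rewrite Phi_term_eq, Cmod_mult, Cmod_R, z_ep.
assert (Hr : 0 < exp (-/X) < 1).
{ split; [apply exp_pos|]. rewrite <- exp_0. apply exp_increasing.
  assert (0 < / X) by (apply Rinv_0_lt_compat; lra). lra. }
rewrite Cmod_pow_ep by lra.
assert (H1 : Rabs (abs_mobius (S n) / INR (S j)) <= 1).
{ unfold abs_mobius. assert (HJ : 1 <= INR (S j)) by (apply (le_INR 1); lia).
  assert (Hm := abs_mu_le1 (S n)). assert (0 <= Rabs (IZR (mobius (S n)))) by apply Rabs_pos.
  rewrite Rabs_pos_eq by (apply Rmult_le_pos; [lra|apply Rlt_le, Rinv_0_lt_compat; lra]).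
  apply (Rmult_le_reg_r (INR (S j))); [lra|]. unfold Rdiv. rewrite Rmult_assoc, Rinv_l by lra. lra. }
rewrite <- pow_add.
assert (H2 : exp (-/X) ^ (S j * S n) <= exp (-/X) ^ (j + n)) by (apply pow_decr; [lra|nia]).
assert (0 <= exp (-/X) ^ (S j * S n)) by (apply pow_le; lra).
assert (0 <= Rabs (abs_mobius (S n) / INR (S j))) by apply Rabs_pos.
nra.
Qed.

Lemma Phi_bound A X th (T : nat) : 0 < X -> in_minor_arcs A X th ->
  INR T ^ 3 <= Rpower (ln X) A ->
  Cmod (Phi_absmu (RtoC (exp (- / X)) * e_ th)%C)
    <= INR T * INR T * (2 * X / Rpower (ln X) A) + 8 * X / INR (S T).
Proof.
intros HX Hmin HT.
set (L := Rpower (ln X) A) in *.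
assert (HL : 0 < L) by apply Lpos.
set (z := (RtoC (exp (- / X)) * e_ th)%C).
set (rho := exp (-/X)).
assert (Hr : 0 < rho < 1).
{ split; [apply exp_pos|]. unfold rho. rewrite <- exp_0. apply exp_increasing.
  assert (0 < / X) by (apply Rinv_0_lt_compat; lra). lra. }
set (f := fun j n => Phi_term z (S j) (S n)).
assert (Hex1 : forall j, ex_series (fun n => fst (f j n))).
{ intros j. apply (@ex_series_le R_AbsRing R_CompleteNormedModule _ (fun n => rho ^ j * rho ^ n)).
  - intros n. change (norm (fst (f j n))) with (Rabs (fst (f j n))).
    eapply Rle_trans; [apply fst_le_Cmod|]. apply crude; auto.
  - apply (ex_series_ext (fun n => scal (rho ^ j) (rho ^ n))); [reflexivity|].
    apply (@ex_series_scal_l R_AbsRing R_NormedModule). apply ex_series_geom. rewrite Rabs_pos_eq; lra. }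
assert (Hex2 : forall j, ex_series (fun n => snd (f j n))).
{ intros j. apply (@ex_series_le R_AbsRing R_CompleteNormedModule _ (fun n => rho ^ j * rho ^ n)).
  - intros n. change (norm (snd (f j n))) with (Rabs (snd (f j n))).
    eapply Rle_trans; [apply snd_le_Cmod|]. apply crude; auto.
  - apply (ex_series_ext (fun n => scal (rho ^ j) (rho ^ n))); [reflexivity|].
    apply (@ex_series_scal_l R_AbsRing R_NormedModule). apply ex_series_geom. rewrite Rabs_pos_eq; lra. }
set (I := fun j => (Series (fun n => fst (f j n)), Series (fun n => snd (f j n)))).
assert (HI1 : forall j, Cmod (I j) <= / (1 - rho) * rho ^ j).
{ intros j. apply LLc; auto. intros N.
  eapply Rle_trans; [apply Cmod_csum|].
  eapply Rle_trans; [apply (rsum_le _ (fun n => rho ^ j * rho ^ n)); intros; apply crude; auto|].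
  rewrite rsum_scal. rewrite Rmult_comm. apply Rmult_le_compat_r; [apply pow_le; lra|].
  apply rsum_geo0; lra. }
assert (HI2 : forall j, Cmod (I j) <= bJ X L T (S j)).
{ intros j. apply LLc; auto. intros N.
  eapply Rle_trans; [apply (per_j A X th T (S j) N); auto; lia|].
  apply sum_beta; auto; lia. }
assert (HexU : ex_series (fun j => fst (I j))).
{ apply (@ex_series_le R_AbsRing R_CompleteNormedModule _ (fun j => / (1 - rho) * rho ^ j)).
  - intros j. change (norm (fst (I j))) with (Rabs (fst (I j))).
    eapply Rle_trans; [apply fst_le_Cmod|]. apply HI1.
  - apply (ex_series_ext (fun n => scal (/ (1 - rho)) (rho ^ n))); [reflexivity|].
    apply (@ex_series_scal_l R_AbsRing R_NormedModule). apply ex_series_geom. rewrite Rabs_pos_eq; lra. }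
assert (HexV : ex_series (fun j => snd (I j))).
{ apply (@ex_series_le R_AbsRing R_CompleteNormedModule _ (fun j => / (1 - rho) * rho ^ j)).
  - intros j. change (norm (snd (I j))) with (Rabs (snd (I j))).
    eapply Rle_trans; [apply snd_le_Cmod|]. apply HI1.
  - apply (ex_series_ext (fun n => scal (/ (1 - rho)) (rho ^ n))); [reflexivity|].
    apply (@ex_series_scal_l R_AbsRing R_NormedModule). apply ex_series_geom. rewrite Rabs_pos_eq; lra. }
change (Phi_absmu z) with (Series (fun j => fst (I j)), Series (fun j => snd (I j))).
apply LLc; auto. intros N.
eapply Rle_trans; [apply Cmod_csum|].
eapply Rle_trans; [apply (rsum_le _ (fun j => bJ X L T (S j))); intros; apply HI2|].
apply sum_bJ; auto.
Qed.

Theorem lemma6p8 :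
  forall A : R, 0 < A ->
  exists C X0 : R, 0 < C /\
    forall X : R, X0 <= X ->
    forall theta : R, in_minor_arcs A X theta ->
      Cmod (Phi_absmu (RtoC (exp (- / X)) * e_ theta)%C)
        <= C * X * Rpower (ln X) (10 - A / 4).
Proof.
intros A HA. exists 10, (exp 1). split; [lra|].
intros X HX th Hth.
assert (He : 0 < exp 1) by apply exp_pos.
assert (HX0 : 0 < X) by lra.
set (l := ln X).
assert (Hl : 1 <= l) by (unfold l; rewrite <- (ln_exp 1); apply ln_le; lra).
set (y := Rpower l (A / 4)).
assert (Hy : 0 < y) by (unfold y, Rpower; apply exp_pos).
set (k := Int_part y).
destruct (base_Int_part y) as [B1 B2]. fold k in B1, B2.
assert (Hk : (0 <= k)%Z) by (assert (-1 < k)%Z by (apply lt_IZR; simpl; lra); lia).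
set (T := Z.to_nat k).
assert (ET : INR T = IZR k) by (unfold T; rewrite INR_IZR_INZ, Z2Nat.id by lia; reflexivity).
assert (HT0 : 0 <= INR T) by apply pos_INR.
assert (HTy : INR T <= y) by lra.
assert (HTy1 : y < INR (S T)) by (rewrite S_INR; lra).
set (L := Rpower l A).
assert (HL : 0 < L) by (unfold L, Rpower; apply exp_pos).
assert (Hy3 : y ^ 3 = Rpower l (3 * (A/4))).
{ unfold y. rewrite <- Rpower_pow by (unfold Rpower; apply exp_pos).
  rewrite Rpower_mult. f_equal. simpl. ring. }
assert (Hy2 : y ^ 2 = Rpower l (A/2)).
{ unfold y. rewrite <- Rpower_pow by (unfold Rpower; apply exp_pos).
  rewrite Rpower_mult. f_equal. simpl. field. }
assert (HT3 : INR T ^ 3 <= L).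
{ eapply Rle_trans; [apply pow_incr; split; [exact HT0|exact HTy]|].
  rewrite Hy3. unfold L. apply Rle_Rpower; lra. }
eapply Rle_trans; [apply (Phi_bound A X th T HX0 Hth HT3)|].
fold l. fold L.
assert (H1 : INR T * INR T * (2 * X / L) <= 2 * X * Rpower l (- (A/4))).
{ assert (INR T * INR T <= y ^ 2) by (simpl; nra).
  rewrite Hy2 in H.
  assert (E : Rpower l (A/2) / L = Rpower l (- (A/2))).
  { unfold L. replace (- (A/2)) with (A/2 + - A) by field.
    rewrite Rpower_plus, Rpower_Ropp. reflexivity. }
  assert (Hm : Rpower l (- (A/2)) <= Rpower l (- (A/4))) by (apply Rle_Rpower; lra).
  apply (Rle_trans _ (Rpower l (A/2) * (2 * X / L))).
  - apply Rmult_le_compat_r; [|exact H]. apply Rlt_le, Rdiv_lt_0_compat; lra.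
  - replace (Rpower l (A / 2) * (2 * X / L)) with (2 * X * (Rpower l (A/2) / L)) by (field; lra).
    rewrite E. apply Rmult_le_compat_l; lra. }
assert (H2 : 8 * X / INR (S T) <= 8 * X * Rpower l (- (A/4))).
{ rewrite Rpower_Ropp. fold y. unfold Rdiv. apply Rmult_le_compat_l; [lra|].
  apply Rinv_le_contravar; lra. }
assert (H3 : Rpower l (- (A/4)) <= Rpower l (10 - A/4)) by (apply Rle_Rpower; lra).
assert (0 <= Rpower l (- (A/4))) by (unfold Rpower; apply Rlt_le, exp_pos).
nra.
Qed.
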